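(* Let $\Sigma$ be a ranked alphabet, $B$ a strong bimonoid and $\mathcal{A}=(Q,\delta,F)$ a $(\Sigma,B)$-wta. The following are equivalent: (i) $\mathcal{N}(\mathcal{A})$ is finite; (ii) for each final variant $\mathcal{B}$ of $\mathcal{A}$, the Nerode algebra $\mathcal{N}(\mathcal{B})$ is finite and $[\![\mathcal{B}]\!]^{\mathrm{init}}$ is i-recognizable by a final variant of $\mathrm{rel}(\mathcal{N}(\mathcal{A}))$; (iii) each $r\in[\![\mathrm{FV}(\mathcal{A})]\!]^{\mathrm{init}}$ is i-recognizable by some crisp-deterministic $(\Sigma,B)$-wta.
   Context: Ranked alphabet $\Sigma$ ($\Sigma^{(0)}\ne\emptyset$), trees $T_\Sigma$; strong bimonoid $(B,\oplus,\otimes,\mathbb{0},\mathbb{1})$ (commutative monoid $(B,\oplus,\mathbb{0})$, monoid $(B,\otimes,\mathbb{1})$, $\mathbb{0}\ne\mathbb{1}$, $\mathbb{0}$ absorbing, no distributivity). $(\Sigma,B)$-wta $\mathcal{A}=(Q,\delta,F)$: $Q$ finite nonempty, $\delta_k:Q^k\times\Sigma^{(k)}\times Q\to B$, $F:Q\to B$. Vector algebra $\mathrm{V}(\mathcal{A})=(B^Q,\delta_{\mathcal{A}})$, $\delta_{\mathcal{A}}(\sigma)(v_1,\dots,v_k)_q=\bigoplus_{q_1,\dots,q_k}\big(\bigotimes_{i=1}^k(v_i)_{q_i}\big)\otimes\delta_k(q_1\dots q_k,\sigma,q)$; $h_{\mathrm{V}(\mathcal{A})}:T_\Sigma\to B^Q$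 the unique homomorphism; $[\![\mathcal{A}]\!]^{\mathrm{init}}(\xi)=\bigoplus_q h_{\mathrm{V}(\mathcal{A})}(\xi)_q\otimes F_q$. A weighted tree language $r:T_\Sigma\to B$ is i-recognizable by $\mathcal{A}$ if $r=[\![\mathcal{A}]\!]^{\mathrm{init}}$. Crisp-deterministic: for all $k,\sigma\in\Sigma^{(k)},q_1,\dots,q_k$ a unique $q$ with $\delta_k(q_1\dots q_k,\sigma,q)=\mathbb{1}$, all other such values $\mathbb{0}$. A final variant of $\mathcal{A}$ is any wta $(Q,\delta,F')$ with $F':Q\to B$ arbitrary; $\mathrm{FV}(\mathcal{A})$ is the set of final variants, $[\![\mathrm{FV}(\mathcal{A})]\!]^{\mathrm{init}}=\{[\![\mathcal{B}]\!]^{\mathrm{init}}\mid\mathcal{B}\in\mathrm{FV}(\mathcal{A})\}$. Nerode algebra $\mathcal{N}(\mathcal{A})=(Q_{\mathcal{N}},\theta_{\mathcal{N}},F_{\mathcal{N}})$: $(Q_{\mathcal{N}},\theta_{\mathcal{N}})$ the smallest subalgebra of $\mathrm{V}(\mathcal{A})$ (so $Q_{\mathcal{N}}=\mathrm{im}(h_{\mathrm{V}(\mathcal{A})})$), $(F_{\mathcal{N}})_v=\bigoplus_q v_q\otimes F_q$; finite if $Q_{\mathcal{N}}$ is finite. For a finite $(\Sigma,B)$-algebra $(P,\theta,G)$ ($(P,\theta)$ a $\Sigma$-algebra, $G:P\to B$), $\mathrm{rel}(P,\theta,G)$ is the crisp-deterministic wta $(P,\delta',G)$ with $\delta'_k(p_1\dots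 p_k,\sigma,p)=\mathbb{1}$ iff $\theta(\sigma)(p_1,\dots,p_k)=p$, and $\mathbb{0}$ otherwise. *)

(* Defs.v *)
From HB Require Import structures.
From mathcomp Require Import all_boot.
From mathcomp Require Import boolp.

Set Implicit Arguments.
Unset Strict Implicit.
Unset Printing Implicit Defensive.

Definition cls (T : Type) : Type := T.
HB.instance Definition _ (T : Type) := gen_eqMixin (cls T).
HB.instance Definition _ (T : Type) := gen_choiceMixin (cls T).

Record ranked_alphabet := RankedAlphabet {
  sym :> finType;
  rk : sym -> nat }.

Definition has_nullary (S : ranked_alphabet) : Prop := exists s : S, rk s = 0.

Inductive tree (S : ranked_alphabet) : Type :=
  Node (s : S) (ts : 'I_(rk s) -> tree S).

Record strong_bimonoid := StrongBimonoid {
  carrier :> Type;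
  badd : carrier -> carrier -> carrier;
  bmul : carrier -> carrier -> carrier;
  bzero : carrier;
  bone : carrier;
  baddA : forall x y z, badd x (badd y z) = badd (badd x y) z;
  baddC : forall x y, badd x y = badd y x;
  badd0 : forall x, badd bzero x = x;
  bmulA : forall x y z, bmul x (bmul y z) = bmul (bmul x y) z;
  bmul1 : forall x, bmul bone x = x;
  bmulr1 : forall x, bmul x bone = x;
  bmul0 : forall x, bmul bzero x = bzero;
  bmulr0 : forall x, bmul x bzero = bzero;
  bzero_neq_one : bzero <> bone }.

(* finite sums (order irrelevant since (B, +, 0) is a commutative monoid) and
   ordered finite products *)
Definition bsum (B : strong_bimonoid) (I : Type) (l : seq I) (f : I -> B) : B :=
  foldr (fun i acc => badd (f i) acc) (bzero B) l.
Definition bprod (B : strong_bimonoid) (l : seq B) : B :=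
  foldr (@bmul B) (bone B) l.

(* delta s qs q  is  delta_k(q_1 ... q_k, s, q)  with k = rk s, qs i = q_(i+1) *)
Record wta (S : ranked_alphabet) (B : strong_bimonoid) := Wta {
  st : finType;
  delta : forall s : S, {ffun 'I_(rk s) -> st} -> st -> B;
  fin : st -> B }.

Section WtaSem.
Variables (S : ranked_alphabet) (B : strong_bimonoid) (A : wta S B).

(* operation of the vector algebra V(A) = (B^Q, delta_A) *)
Definition valg (s : S) (v : 'I_(rk s) -> st A -> B) : st A -> B :=
  fun q => bsum (enum {ffun 'I_(rk s) -> st A})
    (fun qs => bmul (bprod [seq v i (qs i) | i <- enum 'I_(rk s)]) (delta qs q)).

Fixpoint hV (t : tree S) : st A -> B :=
  match t with Node s ts => valg (fun i => hV (ts i)) end.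

Definition init_sem (t : tree S) : B :=
  bsum (enum (st A)) (fun q => bmul (hV t q) (fin q)).

Definition hvec (t : tree S) : {ffun st A -> cls B} := [ffun q => hV t q].

(* N(A) is finite: Q_N = im(h_V(A)) is a finite set *)
Definition nerode_finite : Prop :=
  exists l : seq {ffun st A -> cls B}, forall t, hvec t \in l.

Definition enumerates_nerode (l : seq {ffun st A -> cls B}) : Prop :=
  uniq l /\ forall v, v \in l <-> exists t, v = hvec t.

(* rel(Q_N, theta_N, G) for the Nerode algebra with states enumerated by l
   (theta_N is the restriction of delta_A) and an arbitrary final weight G *)
Definition rel_nerode (l : seq {ffun st A -> cls B}) (G : seq_sub l -> B)
  : wta S B :=
  @Wta S B (seq_sub l)
    (fun s ps p =>
       if ([ffun q => valg (fun i => (val (ps i) : {ffun st A -> cls B})) q]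
              : {ffun st A -> cls B}) == val p
       then bone B else bzero B)
    G.

End WtaSem.

Definition final_variant S B (A : wta S B) (F' : st A -> B) : wta S B :=
  @Wta S B (st A) (@delta S B A) F'.

Definition crisp_deterministic S B (A : wta S B) : Prop :=
  forall (s : S) (qs : {ffun 'I_(rk s) -> st A}),
    exists q, delta qs q = bone B /\ forall q', q' <> q -> delta qs q' = bzero B.

Definition i_recognizes S B (A : wta S B) (r : tree S -> B) : Prop :=
  forall t, r t = init_sem A t.

(* Main.v *)
Require Import Defs.
From HB Require Import structures.
From mathcomp Require Import all_boot boolp.
Set Implicit Arguments. Unset Strict Implicit.

Section L.
Variable B : strong_bimonoid.
Lemma bsum_cons (I : Type) (y : I) l (f : I -> B) : bsum (y :: l) f = badd (f y) (bsum l f).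
Proof. by []. Qed.
Lemma bprod_cons (y : B) l : bprod (y :: l) = bmul y (bprod l).
Proof. by []. Qed.

Lemma bsum0 (I : eqType) (l : seq I) (f : I -> B) :
  (forall x, x \in l -> f x = bzero B) -> bsum l f = bzero B.
Proof.
elim: l => [//|y l IH] H.
have H' : forall x, x \in l -> f x = bzero B by move=> x Hx; apply: H; rewrite inE Hx orbT.
by rewrite bsum_cons H ?mem_head // badd0 IH.
Qed.

Lemma bsum1 (I : eqType) (l : seq I) (f : I -> B) x : uniq l -> x \in l ->
  (forall y, y \in l -> y != x -> f y = bzero B) -> bsum l f = f x.
Proof.
elim: l => [//|y l IH]; rewrite cons_uniq => /andP[Hy Hu] Hx H; rewrite bsum_cons.
have [exy|nxy] := eqVneq y x.
  subst y; rewrite bsum0; first by rewrite baddC badd0.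
  move=> z Hz; apply: H; first by rewrite inE Hz orbT.
  by apply: contraNneq Hy => <-.
rewrite H ?mem_head // badd0 IH //.
  by move: Hx; rewrite inE eq_sym (negbTE nxy).
by move=> z Hz; apply: H; rewrite inE Hz orbT.
Qed.

Lemma bprod_one (I : eqType) (l : seq I) (f : I -> B) :
  (forall i, i \in l -> f i = bone B) -> bprod (map f l) = bone B.
Proof.
elim: l => [//|y l IH] H.
have H' : forall x, x \in l -> f x = bone B by move=> x Hx; apply: H; rewrite inE Hx orbT.
by rewrite map_cons bprod_cons H ?mem_head // bmul1 IH.
Qed.

Lemma bprod_zero (I : eqType) (l : seq I) (f : I -> B) i :
  i \in l -> f i = bzero B -> bprod (map f l) = bzero B.
Proof.
elim: l => [//|y l IH] Hi H; rewrite map_cons bprod_cons.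
move: Hi; rewrite inE => /orP[/eqP Ei|Hi]; first by rewrite -Ei H bmul0.
by rewrite IH // bmulr0.
Qed.
End L.

Lemma ffun_neq (I : finType) (T : eqType) (f g : {ffun I -> T}) :
  f != g -> exists i, f i != g i.
Proof.
move=> H; have /existsP[i Hi] : [exists i, f i != g i]; last by exists i.
apply: contraR H => /existsPn K; apply/eqP/ffunP => i; exact/eqP/negbNE/K.
Qed.

Section M.
Variables (S : ranked_alphabet) (B : strong_bimonoid).

Lemma hV_node (C : wta S B) s ts q :
  @hV S B C (@Node S s ts) q =
  bsum (enum {ffun 'I_(rk s) -> st C})
    (fun qs => bmul (bprod [seq hV (ts i) (qs i) | i <- enum 'I_(rk s)]) (delta qs q)).
Proof. by []. Qed.

Lemma crisp_hV (C : wta S B) : crisp_deterministic C ->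
  forall t, exists p, forall p', @hV S B C t p' = if p' == p then bone B else bzero B.
Proof.
move=> HC; elim=> s ts IH.
have [r Hr] := choice IH.
pose qs0 : {ffun 'I_(rk s) -> st C} := [ffun i => r i].
have [q0 [H1 H0]] := HC s qs0.
exists q0 => p'; rewrite hV_node (bsum1 (x := qs0)) ?enum_uniq ?mem_enum //.
  rewrite bprod_one ?bmul1; last by move=> i _; rewrite Hr ffunE eqxx.
  have [->|np] := eqVneq p' q0; first exact: H1.
  by apply: H0 => E; rewrite E eqxx in np.
move=> y _ /ffun_neq [i Hi]; rewrite ffunE in Hi.
by rewrite (@bprod_zero _ _ _ _ i) ?mem_enum ?bmul0 // Hr (negbTE Hi).
Qed.

Lemma crisp_init (C : wta S B) : crisp_deterministic C ->
  forall t, exists p, init_sem C t = @fin S B C p.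
Proof.
move=> HC t; have [p Hp] := crisp_hV HC t; exists p.
rewrite /init_sem (bsum1 (x := p)) ?enum_uniq ?mem_enum // ?Hp ?eqxx ?bmul1 //.
by move=> y _ ny; rewrite Hp (negbTE ny) bmul0.
Qed.
End M.

Section N.
Variables (S : ranked_alphabet) (B : strong_bimonoid).

Lemma iii_i (A : wta S B) :
  (forall F' : st A -> B, exists C : wta S B, 0 < #|st C| /\ crisp_deterministic C /\
       i_recognizes C (init_sem (final_variant (A:=A) F'))) -> nerode_finite A.
Proof.
move=> H.
pose ind q : st A -> B := fun q' => if q' == q then bone B else bzero B.
have H' : forall q : st A, exists C : wta S B, crisp_deterministic C /\
    forall t, @hV S B A t q = init_sem C t.
  move=> q; have [C [_ [HC HR]]] := H (ind q); exists C; split => // t.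
  rewrite -HR /init_sem (bsum1 (x:=q)) ?enum_uniq ?mem_enum //.
    by rewrite [fin _]/= /ind eqxx bmulr1.
  by move=> y _ ny; rewrite [fin _]/= /ind (negbTE ny) bmulr0.
have [Cf HC] := choice H'.
pose L : seq (cls B) := flatten [seq [seq (@fin S B (Cf q) p : cls B) | p <- enum (st (Cf q))] | q <- enum (st A)].
have memL : forall t (q : st A), (@hV S B A t q : cls B) \in L.
  move=> t q; have [HCq HRq] := HC q; have [p Hp] := crisp_init HCq t.
  apply/flattenP; exists [seq (@fin S B (Cf q) p : cls B) | p <- enum (st (Cf q))].
    by apply/mapP; exists q; rewrite ?mem_enum.
  by apply/mapP; exists p; rewrite ?mem_enum // HRq Hp.
exists (map (fun g : {ffun st A -> seq_sub L} => ([ffun q => (val (g q) : cls B)] : {ffun st A -> cls B})) (enum {ffun st A -> seq_sub L})) => t.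
apply/mapP; exists [ffun q => SeqSub (memL t q)]; first by rewrite mem_enum.
by apply/ffunP => q; rewrite !ffunE.
Qed.
End N.

Section R.
Variables (S : ranked_alphabet) (B : strong_bimonoid) (A : wta S B).
Variables (l : seq {ffun st A -> cls B}) (Hl : forall t, hvec A t \in l).
Definition pt t : seq_sub l := SeqSub (Hl t).

Lemma rel_hV (G : seq_sub l -> B) t p :
  @hV S B (rel_nerode G) t p = if p == pt t then bone B else bzero B.
Proof.
elim: t p => s ts IH p.
rewrite hV_node (bsum1 (x := [ffun i => pt (ts i)])) ?enum_uniq ?mem_enum //.
  rewrite bprod_one ?bmul1; last by move=> i _; rewrite IH ffunE eqxx.
  rewrite /= (_ : [ffun q => _] = ssval (pt (@Node S s ts))); last first.
    apply/ffunP => q; rewrite !ffunE /=; congr valg.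
    by apply: funext => i; apply: funext => q'; rewrite !ffunE.
  have -> : (ssval (pt (@Node S s ts)) == ssval p) = (p == pt (@Node S s ts)) => //.
  by apply/eqP/eqP => [E|->//]; apply: val_inj; exact: esym E.
move=> y _ /ffun_neq [i Hi]; rewrite ffunE in Hi.
by rewrite (@bprod_zero _ _ _ _ i) ?mem_enum ?bmul0 // IH (negbTE Hi).
Qed.
End R.

Section R2.
Variables (S : ranked_alphabet) (B : strong_bimonoid) (A : wta S B).
Variables (l : seq {ffun st A -> cls B}) (Hl : forall t, hvec A t \in l).

Lemma rel_rec (F' : st A -> B) :
  i_recognizes (rel_nerode (fun p : seq_sub l => bsum (enum (st A)) (fun q => bmul (ssval p q) (F' q))))
    (init_sem (final_variant (A:=A) F')).
Proof.
move=> t; rewrite [RHS]/init_sem (bsum1 (x := pt Hl t)) ?enum_uniq ?mem_enum //.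
  rewrite rel_hV eqxx bmul1 /init_sem /=; congr bsum.
  by apply: funext => q; rewrite ffunE.
by move=> y _ ny; rewrite rel_hV (negbTE ny) bmul0.
Qed.

Lemma rel_crisp (G : seq_sub l -> B) :
  (forall v, v \in l <-> exists t, v = hvec A t) -> crisp_deterministic (rel_nerode G).
Proof.
move=> He s ps.
have Ht : forall i, exists t, ssval (ps i) = hvec A t.
  by move=> i; apply/He; exact: ssvalP (ps i).
have [ts Hts] := choice Ht.
have Hin : hvec A (@Node S s ts) \in l by apply/He; exists (@Node S s ts).
have Ew : [ffun q => valg (fun i => ssval (ps i) : {ffun st A -> cls B}) q] = hvec A (@Node S s ts) :> {ffun st A -> cls B}.
  apply/ffunP => q; rewrite !ffunE /=; congr valg.
  by apply: funext => i; apply: funext => q'; rewrite Hts ffunE.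
exists (SeqSub Hin); rewrite /= Ew eqxx; split => // q' nq.
case: eqP => // E; case: nq; apply: val_inj; exact: esym E.
Qed.
End R2.

Lemma i_ii (S : ranked_alphabet) (B : strong_bimonoid) (A : wta S B) :
  nerode_finite A -> exists l, enumerates_nerode (A:=A) l /\ (forall t, hvec A t \in l).
Proof.
move=> [l0 Hl0]; exists (undup [seq v <- l0 | `[< exists t, v = hvec A t >]]).
have He : forall v, v \in undup [seq v <- l0 | `[< exists t, v = hvec A t >]] <-> exists t, v = hvec A t.
  move=> v; rewrite mem_undup mem_filter; split; first by move/andP=> [/asboolP H _].
  by move=> [t ->]; rewrite Hl0 andbT; apply/asboolP; exists t.
split; first by split; [exact: undup_uniq | exact: He].
by move=> t; apply/He; exists t.
Qed.

Theorem theorem6p5 (S : ranked_alphabet) (B : strong_bimonoid) (A : wta S B)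
  (HS : has_nullary S) (HQ : 0 < #|st A|) :
  (* (i) <-> (ii) *)
  (nerode_finite A <->
   exists l : seq {ffun st A -> cls B},
     enumerates_nerode (A:=A) l /\
     forall F' : st A -> B,
       nerode_finite (final_variant (A:=A) F') /\
       exists G : seq_sub l -> B,
         i_recognizes (rel_nerode (A:=A) G) (init_sem (final_variant (A:=A) F')))
  /\
  (* (i) <-> (iii) *)
  (nerode_finite A <->
   forall F' : st A -> B,
     exists C : wta S B,
       0 < #|st C| /\ crisp_deterministic C /\
       i_recognizes C (init_sem (final_variant (A:=A) F'))).
Proof.
split; split.
- move=> Hfin; have [l [He Hl]] := i_ii Hfin; exists l; split => // F'; split; first exact: Hfin.
  by eexists; exact: rel_rec Hl F'.
- by move=> [l [[_ He] _]]; exists l => t; apply/He; exists t.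
- move=> /i_ii [l [[Hu He] Hl]] F'.
  exists (rel_nerode (fun p : seq_sub l => bsum (enum (st A)) (fun q => bmul (ssval p q) (F' q)))).
  split; last split; [|exact: rel_crisp He|exact: rel_rec Hl F'].
  have [s0 Hs0] := HS.
  have t0 : tree S.
    apply: (@Node S s0) => i; exfalso; have := ltn_ord i; move: (nat_of_ord i); rewrite Hs0 => n; by [].
  by apply/card_gt0P; exists (pt Hl t0).
- exact: iii_i.
Qed.
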